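(* Let $n\ge 2$ and $a_1,\dots,a_n\in\mathbb{C}$. For $i=1,\dots,n$ let $p_i(x)=\prod_{l\ne i,\,1\le l\le n}(x-a_l)$. Then for every $x\in\mathbb{C}$ the Wronskian \[ W[p_1,\dots,p_n](x)=\det\begin{pmatrix}p_1(x)&\cdots&p_n(x)\\ p_1'(x)&\cdots&p_n'(x)\\ \vdots&&\vdots\\ p_1^{(n-1)}(x)&\cdots&p_n^{(n-1)}(x)\end{pmatrix} \] satisfies \[ W[p_1,\dots,p_n](x)=\Big(\prod_{k=0}^{n-1}k!\Big)\prod_{1\le i<k\le n}(a_i-a_k). \] *)

(* Defs.v *)
From HB Require Import structures.
From mathcomp Require Import all_boot all_order all_algebra.
Set Implicit Arguments. Unset Strict Implicit. Unset Printing Implicit Defensive.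
Import Order.TTheory GRing.Theory Num.Theory.
Local Open Scope ring_scope.

Definition pi_poly (R : comRingType) (n : nat) (a : 'I_n -> R) (i : 'I_n) : {poly R} :=
  \prod_(l < n | l != i) ('X - (a l)%:P).

Definition wronski_mx (R : comRingType) (n : nat) (p : 'I_n -> {poly R}) (x : R)
  : 'M[R]_n := \matrix_(r < n, j < n) ((p j)^`(r)).[x].

(* Main.v *)
Require Import Defs.
From HB Require Import structures.
From mathcomp Require Import all_boot all_order all_algebra.
Import Order.TTheory GRing.Theory Num.Theory.
Local Open Scope ring_scope.
Set Implicit Arguments. Unset Strict Implicit.

Section S.
Variable C : fieldType.

Lemma poly_wide (p : {poly C}) n : (size p <= n)%N ->
  p = \sum_(m < n) p`_m *: 'X^m.
Proof.
move=> hs; rewrite -poly_def; apply/polyP => i; rewrite coef_poly.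
by case: ifP => // /negbT; rewrite -leqNgt => h; rewrite nth_default // (leq_trans hs h).
Qed.

Definition Dmx n (x : C) : 'M[C]_n := \matrix_(r < n, m < n) (('X^m)^`(r)).[x].
Definition Cmx n (p : 'I_n -> {poly C}) : 'M[C]_n := \matrix_(m < n, j < n) (p j)`_m.

Lemma wr_fact n (p : 'I_n -> {poly C}) x : (forall j, size (p j) <= n)%N ->
  wronski_mx p x = Dmx n x *m Cmx p.
Proof.
move=> hs; apply/matrixP => r j; rewrite !mxE (poly_wide (hs j)).
rewrite linear_sum horner_sum; apply: eq_bigr => m _.
by rewrite !mxE linearZ /= hornerZ mulrC.
Qed.

Lemma det_Dmx n x : \det (Dmx n x) = \prod_(k < n) (k`!)%:R.
Proof.
rewrite -det_tr det_trig.
  by apply: eq_bigr => k _; rewrite !mxE derivnXn subnn expr0 ffactnn hornerMn hornerC.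
apply/is_trig_mxP => i j lt; rewrite !mxE derivnXn ffact_small // hornerMn mulr0n //.
Qed.

Lemma size_pi n (a : 'I_n -> C) j : (size (pi_poly a j) <= n)%N.
Proof.
rewrite /pi_poly -big_filter size_prod_XsubC size_filter.
set p := (fun i : 'I_n => i != j).
have h1 := count_predC p (index_enum 'I_n).
have h2 : (0 < count (predC p) (index_enum 'I_n))%N.
  by rewrite -has_count; apply/hasP; exists j; [exact: mem_index_enum | rewrite /= /p negbK].
have h3 : size (index_enum 'I_n) = n by rewrite [index_enum _]unlock -enumT size_enum_ord.
rewrite h3 in h1; rewrite -[X in (_ < X)%N]h1 -addn1 leq_add2l //.
Qed.

Lemma prod_split n (f : 'I_n -> 'I_n -> C) :
  \prod_j \prod_(l | l != j) f j l =
  (\prod_(i < n) \prod_(k < n | (i < k)%N) f k i) * \prod_(i < n) \prod_(k < n | (i < k)%N) f i k.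
Proof.

under eq_bigr => j _ do rewrite (bigID (fun l : 'I_n => (l < j)%N)) /=.
rewrite big_split /=; congr (_ * _).
  rewrite (exchange_big_dep xpredT) //=; apply: eq_bigr => i _.
  by apply: eq_bigl => k; rewrite neq_ltn orbC; case: ltngtP.
apply: eq_bigr => i _; apply: eq_bigl => k.
by rewrite neq_ltn; case: ltngtP.
Qed.

Lemma pi_eq n (a : 'I_n -> C) i k : i != k -> a i = a k -> pi_poly a i = pi_poly a k.
Proof.
move=> ne e; rewrite /pi_poly (bigD1 k) 1?eq_sym //= [RHS](bigD1 i) //= e.
by congr (_ * _); apply: eq_bigl => l; rewrite andbC.
Qed.

Lemma rhs0 n (a : 'I_n -> C) (i k : 'I_n) : (i < k)%N -> a i = a k ->
  \prod_(i0 < n) \prod_(k0 < n | (i0 < k0)%N) (a i0 - a k0) = 0.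
Proof.
move=> lt e; rewrite (bigD1 i) //= (bigD1 k) //= e subrr !mul0r //.
Qed.

Lemma vc n (a : 'I_n -> C) :
  (Vandermonde n (\row_j a j))^T *m Cmx (pi_poly a) =
  diag_mx (\row_j \prod_(l | l != j) (a j - a l)).
Proof.
apply/matrixP => i j; rewrite !mxE.
rewrite (eq_bigr (fun m : 'I_n => (pi_poly a j)`_m * a i ^+ m)); last by move=> m _; rewrite !mxE mulrC.
rewrite -(horner_coef_wide (a i) (size_pi a j)) /pi_poly horner_prod.
under eq_bigr => l _ do rewrite hornerXsubC.
case: eqVneq => [<-|ne] /=; first by rewrite mulr1n.
by rewrite mulr0n (bigD1 i) //= subrr mul0r.
Qed.
End S.

Theorem mainTheorem3 (C : numClosedFieldType) (n : nat) (hn : (2 <= n)%N)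
  (a : 'I_n -> C) (x : C) :
  \det (wronski_mx (pi_poly a) x) =
  (\prod_(k < n) (k`!)%:R) * \prod_(i < n) \prod_(k < n | (i < k)%N) (a i - a k).
Proof.
rewrite (wr_fact _ (size_pi a)) det_mulmx det_Dmx; congr (_ * _).
case: (boolP [forall i, forall k, (i != k) ==> (a i != a k)]) => [/forallP hd | /forallPn [i /forallPn [k]]].
  have hV : (\prod_(i < n) \prod_(k < n | (i < k)%N) (a k - a i)) * \det (Cmx (pi_poly a)) =
     (\prod_(i < n) \prod_(k < n | (i < k)%N) (a k - a i)) * \prod_(i < n) \prod_(k < n | (i < k)%N) (a i - a k).
    rewrite -prod_split.
    have -> : \prod_j \prod_(l | l != j) (a j - a l) = \det (diag_mx (\row_j \prod_(l | l != j) (a j - a l))).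
      by rewrite det_diag; apply: eq_bigr => j _; rewrite mxE.
    rewrite -(vc a) det_mulmx det_tr det_Vandermonde; congr (_ * _).
    by apply: eq_bigr => i _; apply: eq_bigr => k _; rewrite !mxE.
  apply: (mulfI _ hV).
  apply/prodf_neq0 => i _; apply/prodf_neq0 => k ik; rewrite subr_eq0.
  have nki : k != i by rewrite neq_ltn ik orbT.
  by have := forallP (hd k) i; rewrite nki implyTb.
rewrite negb_imply negbK => /andP [ne /eqP e].
rewrite -det_tr (@determinant_alternate _ _ (Cmx (pi_poly a))^T _ _ ne); last by move=> m; rewrite !mxE (pi_eq ne e).
case: (ltngtP (i : nat) k) => [lt|lt|eq]; first by rewrite (rhs0 lt e).
  by rewrite (rhs0 lt (esym e)).
by move/eqP: ne; case; apply: val_inj.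
Qed.
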